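(* Let $\mathfrak X,\mathfrak Y$ be super operator systems. If $\varphi:\mathfrak X\to\mathfrak Y$ is a unital contractive (respectively completely contractive) $*$-linear map, then $\varphi$ is superpositive (respectively completely superpositive). If $\psi:\mathfrak X\to\mathfrak Y$ is a completely superpositive map, then $\psi$ is completely bounded with $\Vert\psi\Vert_{cb}\le 8\,\Vert\psi(\mathbf 1)\Vert$; if moreover $\psi$ is unital, then $\Vert\psi\Vert_{cb}\le 4$.
   Context: A $\mathbb Z_2$-graded Hilbert space is $\widehat{\mathcal H}=\mathcal H^{even}\oplus\mathcal H^{odd}$ with grading operator $\epsilon=\mathrm{diag}(1,-1)$, grading automorphism $\alpha(x)=\epsilon x\epsilon$ and superinvolution $x^*=\epsilon\,x^\dagger\,\epsilon$ ($x^\dagger$ the ordinary adjoint). A super operator system is an abstract unital operator space $(\mathfrak X,\mathbf 1)$ with an antilinear involution $*$ fixing $\mathbf 1$ such that $[x_{ij}]\mapsto[x_{ji}^*]$ is isometric on each $M_n(\mathfrak X)$; equivalently (up to complete isometry) a norm closed subspace of some $\mathcal B(\widehat{\mathcal H})$ containing the identity and invariant under the superinvolution. Superpositivity: represent $\mathfrak X$ (and likewise $\mathfrak Y$) completely isometrically, unitally and $*$-linearly (with respect to the superinvolution) in some $\mathcal B(\widehat{\mathcal H})$. For $x\in M_n(\mathfrak X)$ hermitian (i.e. $[x_{ij}]=[x_{ji}^*]$), write $x=x_0+x_1$ with $x_0=\frac12(x+\alpha(x))$ even and $x_1=\frac12(x-\alpha(x))$ odd ($\alpha$ applied entrywise),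 and put $\iota(x)=x_0+i\,x_1$; $x$ is called superpositive if $\iota(x)$ is a positive operator on $\widehat{\mathcal H}^n$. A $*$-linear map $\psi$ is superpositive if it maps superpositive elements of $\mathfrak X$ to superpositive elements of $\mathfrak Y$, and completely superpositive if every amplification $\psi_n:M_n(\mathfrak X)\to M_n(\mathfrak Y)$ does so. A map is unital if it sends $\mathbf 1$ to $\mathbf 1$. *)

(* Defs.v *)
From HB Require Import structures.
From mathcomp Require Import all_boot all_order all_algebra.
From mathcomp Require Import complex.
From mathcomp Require Import reals.
Set Implicit Arguments. Unset Strict Implicit. Unset Printing Implicit Defensive.
Import Order.TTheory GRing.Theory Num.Theory.
Local Open Scope ring_scope.
Local Open Scope complex_scope.

Section Hilbert.
Variables (R : realType) (H : lmodType R[i]) (ip : H -> H -> R[i]).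

Definition hnorm (x : H) : R := Num.sqrt (complex.Re (ip x x)).

Definition is_hilbert : Prop :=
  [/\ (forall a x y z, ip (a *: x + y) z = a * ip x z + ip y z),
      (forall x y, ip y x = (ip x y)^*),
      (forall x, 0 <= ip x x),
      (forall x, ip x x = 0 -> x = 0) &
      (forall u : nat -> H,
         (forall e : R, 0 < e -> exists N, forall m n, (N <= m)%N -> (N <= n)%N ->
              hnorm (u m - u n) < e) ->
         exists l, forall e : R, 0 < e -> exists N, forall n, (N <= n)%N ->
              hnorm (u n - l) < e)].

Definition lin_op (T : H -> H) : Prop :=
  forall (a : R[i]) x y, T (a *: x + y) = a *: T x + T y.

Definition is_adj (T S : H -> H) : Prop := forall x y, ip (T x) y = ip x (S y).

Definition bop (T : H -> H) : Prop :=
  [/\ lin_op T, (exists M : R, forall x, hnorm (T x) <= M * hnorm x)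
    & exists S, is_adj T S].

Definition opnorm_le (T : H -> H) (c : R) : Prop :=
  0 <= c /\ forall x, hnorm (T x) <= c * hnorm x.

(* Z_2-grading: eps = diag(1,-1) w.r.t. H = H^even (+) H^odd, i.e. a
   self-adjoint involution on H *)
Definition is_grading (eps : H -> H) : Prop :=
  [/\ lin_op eps, is_adj eps eps & forall x, eps (eps x) = x].

Variable eps : H -> H.

(* S = T^* (superinvolution):  T^* = eps T^dagger eps,
   equivalently T^dagger = eps T^* eps *)
Definition is_sadj (T S : H -> H) : Prop := is_adj T (fun y => eps (S (eps y))).

Definition super_opsys (X : (H -> H) -> Prop) : Prop :=
  [/\ (forall T, X T -> bop T),
      X id,
      (forall (a : R[i]) T U, X T -> X U -> X (fun x => a *: T x + U x)),
      (forall (Tn : nat -> H -> H) T, (forall n, X (Tn n)) -> bop T ->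
         (forall e : R, 0 < e -> exists N, forall n, (N <= n)%N ->
             opnorm_le (fun x => Tn n x - T x) e) -> X T) &
      (forall T, X T -> exists S, X S /\ is_sadj T S)].

Definition mx_in (X : (H -> H) -> Prop) n (x : 'I_n -> 'I_n -> H -> H) : Prop :=
  forall i j, X (x i j).

Definition mx_apply n (x : 'I_n -> 'I_n -> H -> H) (v : 'I_n -> H) : 'I_n -> H :=
  fun i => \sum_(j < n) x i j (v j).

Definition mnorm_le n (x : 'I_n -> 'I_n -> H -> H) (c : R) : Prop :=
  0 <= c /\ forall v : 'I_n -> H,
    \sum_(i < n) hnorm (mx_apply x v i) ^+ 2 <= c ^+ 2 * \sum_(i < n) hnorm (v i) ^+ 2.

Definition mx_pos n (x : 'I_n -> 'I_n -> H -> H) : Prop :=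
  forall v : 'I_n -> H, 0 <= \sum_(i < n) ip (mx_apply x v i) (v i).

Definition mx_herm n (x : 'I_n -> 'I_n -> H -> H) : Prop :=
  forall i j, is_sadj (x j i) (x i j).

(* alpha(T) = eps T eps ;  iota(T) = T_0 + i T_1 *)
Definition galpha (T : H -> H) : H -> H := fun h => eps (T (eps h)).
Definition giota (T : H -> H) : H -> H :=
  fun h => 2^-1 *: (T h + galpha T h) + ('i * 2^-1) *: (T h - galpha T h).

Definition mx_superpos n (x : 'I_n -> 'I_n -> H -> H) : Prop :=
  mx_herm x /\ mx_pos (fun i j => giota (x i j)).

End Hilbert.

Section Maps.
Variables (R : realType) (H K : lmodType R[i]) (ipH : H -> H -> R[i]) (ipK : K -> K -> R[i])
  (epsH : H -> H) (epsK : K -> K) (X : (H -> H) -> Prop) (Y : (K -> K) -> Prop).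
Variable phi : (H -> H) -> (K -> K).

Definition amplify n (x : 'I_n -> 'I_n -> H -> H) : 'I_n -> 'I_n -> K -> K :=
  fun i j => phi (x i j).

Definition star_linear : Prop :=
  [/\ forall T, X T -> Y (phi T),
      (forall (a : R[i]) T U, X T -> X U ->
         phi (fun x => a *: T x + U x) = (fun y => a *: phi T y + phi U y)) &
      (forall T S, X T -> X S -> is_sadj ipH epsH T S -> is_sadj ipK epsK (phi T) (phi S))].

Definition unital : Prop := phi id = id.

Definition contractive : Prop :=
  forall T c, X T -> opnorm_le ipH T c -> opnorm_le ipK (phi T) c.

Definition completely_contractive : Prop :=
  forall n x c, mx_in X x -> @mnorm_le _ _ ipH n x c -> mnorm_le ipK (amplify x) c.

Definition superpositive : Prop :=
  forall T, X T -> mx_superpos ipH epsH (fun _ _ : 'I_1 => T) ->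
    mx_superpos ipK epsK (fun _ _ : 'I_1 => phi T).

Definition completely_superpositive : Prop :=
  forall n x, mx_in X x -> @mx_superpos _ _ ipH epsH n x ->
    mx_superpos ipK epsK (amplify x).

Definition cb_le (C : R) : Prop :=
  forall n x c, mx_in X x -> @mnorm_le _ _ ipH n x c -> mnorm_le ipK (amplify x) (C * c).

End Maps.

(* Main.v *)
Require Import Defs.
From mathcomp Require Import all_boot all_order all_algebra complex reals.
From mathcomp Require Import ring lra.
From Stdlib Require Import FunctionalExtensionality ClassicalEpsilon.
Import Order.TTheory GRing.Theory Num.Theory.
Local Open Scope ring_scope.
Local Open Scope complex_scope.
Local Notation RE := complex.Re.
Local Notation IM := complex.Im.
Set Implicit Arguments. Unset Strict Implicit. Unset Printing Implicit Defensive.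

Section IP.
Variables (R : realType) (H : lmodType R[i]) (ip : H -> H -> R[i]).
Hypothesis hh : is_hilbert ip.

Lemma ip_lin a x y z : ip (a *: x + y) z = a * ip x z + ip y z.
Proof. by case: hh. Qed.
Lemma ip_sym x y : ip y x = (ip x y)^*.
Proof. by case: hh. Qed.
Lemma ip_pos x : 0 <= ip x x.
Proof. by case: hh. Qed.

Lemma ip0l z : ip 0 z = 0.
Proof. have := ip_lin 1 0 0 z; rewrite scaler0 addr0 mul1r => h.
by apply/(addrI (ip 0 z)); rewrite addr0 -h. Qed.
Lemma ipDl x y z : ip (x + y) z = ip x z + ip y z.
Proof. by rewrite -[x]scale1r ip_lin mul1r scale1r. Qed.
Lemma ipZl a x z : ip (a *: x) z = a * ip x z.
Proof. by rewrite -[a *: x]addr0 ip_lin ip0l addr0. Qed.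
Lemma ipNl x z : ip (- x) z = - ip x z.
Proof. by rewrite -scaleN1r ipZl mulN1r. Qed.
Lemma ipBl x y z : ip (x - y) z = ip x z - ip y z.
Proof. by rewrite ipDl ipNl. Qed.
Lemma ipDr x y z : ip z (x + y) = ip z x + ip z y.
Proof. by rewrite ip_sym ipDl (ip_sym x z) (ip_sym y z) rmorphD. Qed.
Lemma ipZr a x z : ip z (a *: x) = a^* * ip z x.
Proof. by rewrite ip_sym ipZl (ip_sym x z) rmorphM. Qed.
Lemma ipNr x z : ip z (- x) = - ip z x.
Proof. by apply/(addIr (ip z x)); rewrite -ipDr !addNr ip_sym ip0l conjc0. Qed.
Lemma ipBr x y z : ip z (x - y) = ip z x - ip z y.
Proof. by rewrite ipDr ipNr. Qed.
Lemma ip_suml I (r : seq I) P (F : I -> H) z :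
  ip (\sum_(i <- r | P i) F i) z = \sum_(i <- r | P i) ip (F i) z.
Proof. by elim/big_rec2: _ => [|i a b _ <-]; rewrite ?ip0l // ipDl. Qed.
Lemma ip0r z : ip z 0 = 0.
Proof. by rewrite ip_sym ip0l conjc0. Qed.
Lemma ip_sumr I (r : seq I) P (F : I -> H) z :
  ip z (\sum_(i <- r | P i) F i) = \sum_(i <- r | P i) ip z (F i).
Proof. by elim/big_rec2: _ => [|i a b _ <-]; rewrite ?ip0r // ipDr. Qed.

Lemma ip_Im x : IM (ip x x) = 0.
Proof. by have := ip_pos x; rewrite lecE /= => /andP[/eqP <-]. Qed.
Lemma ip_Re x : 0 <= RE (ip x x).
Proof. by have := ip_pos x; rewrite lecE /= => /andP[]. Qed.
Lemma hnorm2 x : hnorm ip x ^+ 2 = RE (ip x x).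
Proof. by rewrite /hnorm sqr_sqrtr // ip_Re. Qed.
Lemma ip_def x : RE (ip x x) <= 0 -> x = 0.
Proof.
move=> h; case: hh => _ _ _ hd _; apply: hd.
have h0 : RE (ip x x) = 0 by apply/eqP; rewrite eq_le h ip_Re.
by apply/eqP; rewrite eq_complex h0 ip_Im /= !eqxx.
Qed.

Definition vip n (u v : 'I_n -> H) := \sum_i ip (u i) (v i).
Definition NS n (u : 'I_n -> H) := RE (vip u u).

Lemma vip_lin n a (u w z : 'I_n -> H) :
  vip (fun i => a *: u i + w i) z = a * vip u z + vip w z.
Proof. by rewrite /vip mulr_sumr -big_split; apply: eq_bigr => i _; rewrite ip_lin. Qed.
Lemma vipZl n a (u z : 'I_n -> H) : vip (fun i => a *: u i) z = a * vip u z.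
Proof. by rewrite /vip mulr_sumr; apply: eq_bigr => i _; rewrite ipZl. Qed.
Lemma vipDl n (u w z : 'I_n -> H) : vip (fun i => u i + w i) z = vip u z + vip w z.
Proof. by rewrite /vip -big_split; apply: eq_bigr => i _; rewrite ipDl. Qed.
Lemma vipNl n (u z : 'I_n -> H) : vip (fun i => - u i) z = - vip u z.
Proof. by rewrite /vip -sumrN; apply: eq_bigr => i _; rewrite ipNl. Qed.
Lemma vip_sym n (u w : 'I_n -> H) : vip w u = (vip u w)^*.
Proof. by rewrite /vip rmorph_sum; apply: eq_bigr => i _; rewrite ip_sym. Qed.
Lemma vipZr n a (u z : 'I_n -> H) : vip z (fun i => a *: u i) = a^* * vip z u.
Proof. by rewrite /vip mulr_sumr; apply: eq_bigr => i _; rewrite ipZr. Qed.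
Lemma vipDr n (u w z : 'I_n -> H) : vip z (fun i => u i + w i) = vip z u + vip z w.
Proof. by rewrite /vip -big_split; apply: eq_bigr => i _; rewrite ipDr. Qed.
Lemma vip_pos n (u : 'I_n -> H) : 0 <= vip u u.
Proof. by apply: sumr_ge0 => i _; apply: ip_pos. Qed.
Lemma vip_Im n (u : 'I_n -> H) : IM (vip u u) = 0.
Proof. by have := vip_pos u; rewrite lecE /= => /andP[/eqP <-]. Qed.
Lemma NS_ge0 n (u : 'I_n -> H) : 0 <= NS u.
Proof. by have := vip_pos u; rewrite lecE /= => /andP[]. Qed.
Lemma NSE n (u : 'I_n -> H) : NS u = \sum_i hnorm ip (u i) ^+ 2.
Proof. by rewrite /NS /vip raddf_sum; apply: eq_bigr => i _; rewrite hnorm2. Qed.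

Lemma vip_exp n a b (u w : 'I_n -> H) :
  vip (fun i => a *: u i + b *: w i) (fun i => a *: u i + b *: w i) =
  a * a^* * vip u u + a * b^* * vip u w + b * a^* * (vip u w)^* + b * b^* * vip w w.
Proof.
rewrite vipDl !vipZl !vipDr !vipZr (vip_sym u w).
ring.
Qed.

Lemma NS_exp n a b (u w : 'I_n -> H) :
  NS (fun i => a *: u i + b *: w i) =
  (RE a ^+ 2 + IM a ^+ 2) * NS u + (RE b ^+ 2 + IM b ^+ 2) * NS w
  + 2 * RE (a * b^* * vip u w).
Proof.
rewrite /NS vip_exp; have := vip_Im u; have := vip_Im w.
case: a => a1 a2; case: b => b1 b2; case: (vip u u) => u1 u2;
case: (vip w w) => w1 w2; case: (vip u w) => z1 z2 /= hw hu; subst.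
simpc => /=. ring.
Qed.


Lemma ReIm_formula (A : R[i]) :
  2^-1 * (A + A^*) + ('i * 2^-1) * (A - A^*) = (RE A - IM A)%:C.
Proof.
have h2 : (2^-1 : R[i]) = (2^-1 : R)%:C by rewrite fmorphV /= rmorph_nat.
rewrite h2; case: A => a b; simpc; rewrite /=.
by congr (_ +i* _); field.
Qed.

Lemma ReIm_formula' (A B : R[i]) : B = A^* ->
  2^-1 * (A + B) + ('i * 2^-1) * (A - B) = (RE A - IM A)%:C.
Proof. by move=> ->; apply: ReIm_formula. Qed.

Lemma iota_formula n (eps : H -> H) (y : 'I_n -> 'I_n -> H -> H) (v : 'I_n -> H) :
  mx_herm ip eps y ->
  vip (mx_apply (fun i j => giota eps (y i j)) v) v =
  (RE (vip (mx_apply y v) v) - IM (vip (mx_apply y v) v))%:C.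
Proof.
move=> hy.
have hA : vip (mx_apply y v) v = \sum_i \sum_j ip (y i j (v j)) (v i).
  by rewrite /vip /mx_apply; apply: eq_bigr => i _; rewrite ip_suml.
have hB : \sum_i \sum_j ip (eps (y i j (eps (v j)))) (v i) = (vip (mx_apply y v) v)^*.
  rewrite hA rmorph_sum; under [RHS]eq_bigr do rewrite rmorph_sum.
  rewrite [RHS]exchange_big /=; apply: eq_bigr => i _; apply: eq_bigr => j _.
  by rewrite (hy i j) [LHS]ip_sym.
rewrite -(ReIm_formula' hB) hA -big_split -sumrB !mulr_sumr -big_split /=.
rewrite /vip /mx_apply; apply: eq_bigr => i _.
rewrite ip_suml -big_split -sumrB !mulr_sumr -big_split /=.
apply: eq_bigr => j _; rewrite /giota /galpha ipDl !ipZl ipDl ipBl.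
by [].
Qed.


Lemma pos_iff n (eps : H -> H) (y : 'I_n -> 'I_n -> H -> H) :
  mx_herm ip eps y ->
  mx_pos ip (fun i j => giota eps (y i j)) <->
  forall v, 0 <= RE (vip (mx_apply y v) v) - IM (vip (mx_apply y v) v).
Proof.
move=> hy; rewrite /mx_pos; split=> h v.
  by have := h v; rewrite -/(vip _ _) iota_formula // ler0c.
by rewrite -/(vip _ _) iota_formula // ler0c.
Qed.

Lemma NS_scale n a (u : 'I_n -> H) :
  NS (fun i => a *: u i) = (RE a ^+ 2 + IM a ^+ 2) * NS u.
Proof.
rewrite /NS vipZl vipZr mulrA; have := vip_Im u.
case: a => a1 a2; case: (vip u u) => u1 u2 /= hu; subst.
simpc => /=. ring.
Qed.

Lemma NS_real_scale n (t : R) (u : 'I_n -> H) :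
  NS (fun i => t%:C *: u i) = t ^+ 2 * NS u.
Proof. by rewrite NS_scale /= expr0n /= addr0. Qed.

Lemma vipNr n (u z : 'I_n -> H) : vip z (fun i => - u i) = - vip z u.
Proof. by rewrite /vip -sumrN; apply: eq_bigr => i _; rewrite ipNr. Qed.

Lemma RE_conj (z : R[i]) : RE z^* = RE z.
Proof. by case: z. Qed.

Lemma NS_D n (u w : 'I_n -> H) :
  NS (fun i => u i + w i) = NS u + NS w + 2 * RE (vip u w).
Proof.
rewrite /NS vipDl !vipDr (vip_sym u w) !raddfD /= RE_conj; ring.
Qed.

Lemma NS_B n (u w : 'I_n -> H) :
  NS (fun i => u i - w i) = NS u + NS w - 2 * RE (vip u w).
Proof.
rewrite /NS vipDl !vipDr !vipNl !vipNr opprK (vip_sym u w) !raddfD !raddfN /= RE_conj; ring.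
Qed.

Lemma RE_vipZl n (s : R) (u w : 'I_n -> H) :
  RE (vip (fun i => s%:C *: u i) w) = s * RE (vip u w).
Proof. by rewrite vipZl; case: (vip u w) => z1 z2; simpc. Qed.

Lemma NS_add_le n (u w : 'I_n -> H) :
  NS (fun i => u i + w i) <= 2 * NS u + 2 * NS w.
Proof. have := NS_ge0 (fun i => u i - w i); rewrite NS_B NS_D; lra. Qed.

Lemma vip_le n (u w : 'I_n -> H) (s : R) : 0 < s ->
  2 * RE (vip u w) <= s * NS u + s^-1 * NS w.
Proof.
move=> s0; have := NS_ge0 (fun i => s%:C *: u i - w i).
rewrite NS_B NS_real_scale RE_vipZl => h.
have hs : s * s^-1 = 1 by rewrite mulfV // gt_eqF.
have hs' : 0 < s^-1 by rewrite invr_gt0.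
have := mulr_ge0 (ltW hs') h.
have -> : s^-1 * (s ^+ 2 * NS u + NS w - 2 * (s * RE (vip u w))) =
   s * NS u + s^-1 * NS w - 2 * RE (vip u w).
  by field; rewrite gt_eqF.
lra.
Qed.


Lemma NS_le0 n (a : 'I_n -> H) : NS a <= 0 -> forall i, a i = 0.
Proof.
move=> h i; apply: ip_def.
have h0 : NS a = 0 by apply/eqP; rewrite eq_le h NS_ge0.
move: h0; rewrite /NS /vip raddf_sum => /eqP; rewrite psumr_eq0; last first.
  by move=> k _; apply: ip_Re.
by move=> /allP /(_ i (mem_index_enum _)) /eqP ->.
Qed.

Lemma vip_bound n (a w v : 'I_n -> H) (m : R) : 0 <= m ->
  NS a <= m ^+ 2 * NS w -> RE (vip a v) <= m / 2 * (NS v + NS w).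
Proof.
move=> m0 ha; case: (eqVneq m 0) => [m00 | mn0].
  subst m; rewrite expr0n mul0r in ha.
  have ha0 := NS_le0 ha.
  rewrite /vip big1 ?mul0r // => i _; by rewrite ha0 ip0l.
have mp : 0 < m by rewrite lt_def mn0.
have mi : 0 < m^-1 by rewrite invr_gt0.
have := vip_le a v mi; rewrite invrK => h.
have : m^-1 * NS a <= m^-1 * (m ^+ 2 * NS w) by rewrite ler_pM2l ?invr_gt0.
have -> : m^-1 * (m ^+ 2 * NS w) = m * NS w by field.
have := NS_ge0 v; have := NS_ge0 w.
move=> h1 h2 h3.
have e : m / 2 * (NS v + NS w) = (m * NS v + m * NS w) / 2 by field.
rewrite e; lra.
Qed.

Lemma bound_from_bil n (g w : 'I_n -> H) (k : R) : 0 <= k ->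
  (forall v, - (k * (NS v + NS w)) <= RE (vip g v)) -> NS g <= 4 * k ^+ 2 * NS w.
Proof.
move=> k0 h.
have key : forall s : R, 0 < s -> s * NS g <= k * (s ^+ 2 * NS g + NS w).
  move=> s s0; have := h (fun i => (- s)%:C *: g i).
  rewrite NS_real_scale sqrrN vipZr.
  have -> : RE ((- s)%:C^* * vip g g) = - s * NS g.
    by rewrite /NS; case: (vip g g) => z1 z2; simpc.
  lra.
have hg := NS_ge0 g; have hw := NS_ge0 w.
case: (eqVneq k 0) => [k00 | kn0].
  subst k; have := key 1 ltr01; rewrite !mul0r mul1r => h1.
  by rewrite expr0n /= mulr0 mul0r.
have kp : 0 < k by rewrite lt_def kn0.
have s0 : 0 < (2 * k)^-1 by rewrite invr_gt0 mulr_gt0.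
have := key _ s0.
have -> : k * ((2 * k)^-1 ^+ 2 * NS g + NS w) = (4 * k)^-1 * NS g + k * NS w.
  by field; rewrite gt_eqF.
move=> h1.
have h2 : (4 * k)^-1 * NS g <= k * NS w.
  have -> : (4 * k)^-1 * NS g = (2 * k)^-1 * NS g - (4 * k)^-1 * NS g.
    by field; rewrite gt_eqF.
  lra.
have e : NS g = 4 * k * ((4 * k)^-1 * NS g) by field; rewrite gt_eqF.
rewrite [X in X <= _]e (_ : 4 * k ^+ 2 * NS w = 4 * k * (k * NS w)); last first.
  by rewrite expr2; ring.
by rewrite ler_pM2l ?mulr_gt0.
Qed.


Definition ns1 (x : H) := RE (ip x x).
Lemma ns1_ge0 x : 0 <= ns1 x. Proof. exact: ip_Re. Qed.
Lemma ns1_add x y : ns1 (x + y) <= 2 * ns1 x + 2 * ns1 y.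
Proof. by have := NS_add_le (fun _ : 'I_1 => x) (fun _ => y); rewrite /NS /vip !big_ord1. Qed.

Lemma ns1_sum m (F : 'I_m -> H) : ns1 (\sum_j F j) <= 2 ^+ m * \sum_j ns1 (F j).
Proof.
elim: m F => [|m ih] F.
  by rewrite !big_ord0 /ns1 ip0l /= expr0 mul1r.
rewrite !big_ord_recl; apply: (le_trans (ns1_add _ _)).
have := ih (fun j => F (lift ord0 j)); move=> h.
have h0 := ns1_ge0 (F ord0).
have hs : 0 <= \sum_(i < m) ns1 (F (lift ord0 i)) by apply: sumr_ge0 => i _; apply: ns1_ge0.
have h2 : 1 <= 2 ^+ m :> R by rewrite exprn_ege1 // ler1n.
rewrite exprS; nra.
Qed.

Lemma NS_sum1 n (u : 'I_n -> H) : NS u = \sum_i ns1 (u i).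
Proof. by rewrite /NS /vip raddf_sum. Qed.

Lemma ns1_le_NS n (u : 'I_n -> H) j : ns1 (u j) <= NS u.
Proof.
rewrite NS_sum1 (bigD1 j) //= lerDl; apply: sumr_ge0 => i _; apply: ns1_ge0.
Qed.

Lemma bop_ns T : bop ip T -> exists M, 0 <= M /\ forall h, ns1 (T h) <= M * ns1 h.
Proof.
case=> _ [M hM] _; exists (M ^+ 2); split; first exact: sqr_ge0.
move=> h; have := hM h; rewrite /ns1 -!hnorm2.
have a0 : 0 <= hnorm ip (T h) by apply: sqrtr_ge0.
have b0 : 0 <= hnorm ip h by apply: sqrtr_ge0.
move=> hle; rewrite -exprMn !expr2; exact: ler_pM.
Qed.

Lemma mx_bound n (x : 'I_n -> 'I_n -> H -> H) : (forall i j, bop ip (x i j)) ->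
  exists M, 0 <= M /\ forall u, NS (mx_apply x u) <= M * NS u.
Proof.
move=> hx.
pose Mf i j := proj1_sig (constructive_indefinite_description _ (bop_ns (hx i j))).
have hMf : forall i j, 0 <= Mf i j /\ forall h, ns1 (x i j h) <= Mf i j * ns1 h.
  by move=> i j; rewrite /Mf; case: constructive_indefinite_description.
exists (2 ^+ n * \sum_i \sum_j Mf i j); split.
  by apply: mulr_ge0; [apply: exprn_ge0 | apply: sumr_ge0 => i _; apply: sumr_ge0 => j _; case: (hMf i j)].
move=> u; rewrite NS_sum1 /mx_apply -mulrA mulr_suml mulr_sumr.
apply: ler_sum => i _; apply: (le_trans (ns1_sum _)).
rewrite mulr_suml ler_pM2l ?exprn_gt0 //.
apply: ler_sum => j _; case: (hMf i j) => m0 hm.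
apply: (le_trans (hm (u j))); rewrite ler_wpM2l //; apply: ns1_le_NS.
Qed.


Lemma sq_le (a b : R) : 0 <= a -> 0 <= b -> a ^+ 2 <= b ^+ 2 -> a <= b.
Proof. move=> a0 b0 h; rewrite leNgt; apply/negP => hab; nra. Qed.

Lemma mn1 (m : 'I_1 -> 'I_1 -> H -> H) c :
  mnorm_le ip m c <-> opnorm_le ip (m ord0 ord0) c.
Proof.
have ea : forall v, mx_apply m v ord0 = m ord0 ord0 (v ord0).
  by move=> v; rewrite /mx_apply big_ord1.
split=> [[c0 h] | [c0 h]]; split=> // x.
  have := h (fun _ => x); rewrite !big_ord1 ea => h2.
  apply: sq_le; [exact: sqrtr_ge0 | by apply: mulr_ge0 => //; apply: sqrtr_ge0 |].
  by rewrite exprMn.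
rewrite !big_ord1 ea -exprMn !expr2; apply: ler_pM => //; try apply: sqrtr_ge0.
Qed.

Lemma opnorm_ns P d : opnorm_le ip P d -> forall h, ns1 (P h) <= d ^+ 2 * ns1 h.
Proof.
case=> d0 hP h; rewrite /ns1 -!hnorm2 -exprMn !expr2.
by apply: ler_pM => //; apply: sqrtr_ge0.
Qed.

Lemma RI_bound n (P : H -> H) d (v : 'I_n -> H) : 0 <= d ->
  (forall h, ns1 (P h) <= d ^+ 2 * ns1 h) ->
  RE (vip (fun a => P (v a)) v) - IM (vip (fun a => P (v a)) v) <= 2 * d * NS v.
Proof.
move=> d0 hP.
have hN : NS (fun a => P (v a)) <= d ^+ 2 * NS v.
  by rewrite !NS_sum1 mulr_sumr; apply: ler_sum => i _; apply: hP.
have h1 := @vip_bound n (fun a => P (v a)) v v d d0 hN.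
have h2 := @vip_bound n (fun a => P (v a)) v (fun i => (- 'i) *: v i) d d0 hN.
move: h2; rewrite vipZr.
have -> : RE ((- 'i)^* * vip (fun a => P (v a)) v) = - IM (vip (fun a => P (v a)) v).
  by case: (vip _ _) => z1 z2; simpc.
rewrite NS_scale (_ : RE (- 'i : R[i]) ^+ 2 + IM (- 'i : R[i]) ^+ 2 = 1) ?mul1r; last first.
  by simpc => /=; ring.
move=> h2; have := NS_ge0 v; lra.
Qed.

End IP.

Definition beta (R : realType) : R[i] := 1 + 'i.

Lemma NS_core (R : realType) (H : lmodType R[i]) (ip : H -> H -> R[i]) (hh : is_hilbert ip)
   n (t : R) (u a : 'I_n -> H) :
  NS ip (fun i => t%:C *: u i - beta R *: a i) =
  t ^+ 2 * NS ip u + 2 * NS ip a - 2 * t * (RE (vip ip a u) - IM (vip ip a u)).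
Proof.
rewrite NS_B // NS_real_scale // NS_scale // vipZl // vipZr // (vip_sym hh a u).
have -> : RE (t%:C * ((beta R)^* * (vip ip a u)^*)) = t * (RE (vip ip a u) - IM (vip ip a u)).
  by rewrite /beta; case: (vip ip a u) => z1 z2; simpc => /=; ring.
have -> : RE (beta R) ^+ 2 + IM (beta R) ^+ 2 = 2 by rewrite /beta /=; simpc => /=; ring.
ring.
Qed.

Lemma core_pos (R : realType) (H K : lmodType R[i]) (ipH : H -> H -> R[i]) (ipK : K -> K -> R[i])
  (hH : is_hilbert ipH) (hK : is_hilbert ipK) n
  (A : ('I_n -> H) -> ('I_n -> H)) (B : ('I_n -> K) -> ('I_n -> K)) (M : R) :
  0 <= M ->
  (forall u, NS ipH (A u) <= M * NS ipH u) ->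
  (forall u, 0 <= RE (vip ipH (A u) u) - IM (vip ipH (A u) u)) ->
  (forall t : R, 0 < t ->
     (forall u, NS ipH (fun i => t%:C *: u i - beta R *: A u i) <= (t ^+ 2 + 2 * M) * NS ipH u) ->
     (forall v, NS ipK (fun i => t%:C *: v i - beta R *: B v i) <= (t ^+ 2 + 2 * M) * NS ipK v)) ->
  forall v, 0 <= RE (vip ipK (B v) v) - IM (vip ipK (B v) v).
Proof.
move=> M0 hA hpos hmap v.
have key : forall t : R, 0 < t ->
    - (M * NS ipK v) <= t * (RE (vip ipK (B v) v) - IM (vip ipK (B v) v)).
  move=> t t0.
  have := hmap t t0.
  have hu : forall u, NS ipH (fun i => t%:C *: u i - beta R *: A u i) <= (t ^+ 2 + 2 * M) * NS ipH u.
    move=> u; rewrite NS_core //.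
    have := hA u; have := hpos u; have := NS_ge0 hH u; have := NS_ge0 hH (A u).
    nra.
  move=> /(_ hu v); rewrite NS_core //.
  have := NS_ge0 hK (B v); nra.
set r := RE _ - IM _ in key *.
rewrite leNgt; apply/negP => rneg.
set N := NS ipK v.
have hN : 0 <= N := NS_ge0 hK v.
have tp : 0 < (M * N + 1) / (- r).
  by apply: divr_gt0; [have := mulr_ge0 M0 hN; lra | lra].
have := key _ tp.
have -> : (M * N + 1) / - r * r = - (M * N + 1).
  by field; rewrite lt_eqF.
lra.
Qed.

Section Grad.
Variables (R : realType) (H : lmodType R[i]) (ip : H -> H -> R[i]).
Hypothesis hh : is_hilbert ip.
Variable eps : H -> H.
Hypothesis hg : is_grading ip eps.

Lemma eps_lin a x y : eps (a *: x + y) = a *: eps x + eps y.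
Proof. by case: hg. Qed.
Lemma eps_adj x y : ip (eps x) y = ip x (eps y).
Proof. by case: hg. Qed.
Lemma eps_invol x : eps (eps x) = x.
Proof. by case: hg. Qed.
Lemma eps0 : eps 0 = 0.
Proof. have := eps_lin 1 0 0; rewrite scaler0 addr0 scale1r => h.
by apply/(addrI (eps 0)); rewrite addr0 -h. Qed.
Lemma epsD x y : eps (x + y) = eps x + eps y.
Proof. by rewrite -[x]scale1r eps_lin !scale1r. Qed.
Lemma epsZ a x : eps (a *: x) = a *: eps x.
Proof. by rewrite -[a *: x]addr0 eps_lin eps0 addr0. Qed.
Lemma ip_eps x y : ip (eps x) (eps y) = ip x y.
Proof. by rewrite eps_adj eps_invol. Qed.
Lemma NS_eps n (a : 'I_n -> H) : NS ip (fun i => eps (a i)) = NS ip a.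
Proof. by rewrite /NS /vip; congr (RE _); apply: eq_bigr => i _; rewrite ip_eps. Qed.

Lemma sadj_sym T S : is_sadj ip eps T S -> is_sadj ip eps S T.
Proof.
move=> h u w; rewrite /is_sadj in h *.
rewrite -eps_adj (ip_sym hh (T (eps w)) (eps u)) h eps_invol ip_eps.
exact: ip_sym.
Qed.


Definition Gop n (B : ('I_n -> H) -> ('I_n -> H)) (w : 'I_n -> H) : 'I_n -> H :=
  fun i => beta R *: B w i + (beta R)^* *: eps (B (fun j => eps (w j)) i).

Lemma lin2 (a b c d : R[i]) (x y : H) :
  a *: x + b *: y + (c *: y + d *: x) = (a + d) *: x + (b + c) *: y.
Proof. by rewrite [c *: y + _]addrC addrACA -!scalerDl. Qed.

Lemma core_cb n (B : ('I_n -> H) -> ('I_n -> H)) (k : R) : 0 <= k ->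
  (forall w v, - (k * (NS ip v + NS ip w)) <= RE (vip ip (Gop B w) v)) ->
  forall w, NS ip (B w) <= 2 * k ^+ 2 * NS ip w.
Proof.
move=> k0 hyp w.
have hG : forall w, NS ip (Gop B w) <= 4 * k ^+ 2 * NS ip w.
  by move=> w'; apply: bound_from_bil => // v; apply: hyp.
set G' := fun i => eps (Gop B (fun j => eps (w j)) i).
have hG' : NS ip G' <= 4 * k ^+ 2 * NS ip w.
  by rewrite /G' NS_eps -(NS_eps w); apply: hG.
have hid : forall i, 4%:C *: B w i = (1 - 'i) *: Gop B w i + (1 + 'i) *: G' i.
  move=> i; rewrite /G' /Gop epsD !epsZ eps_invol.
  have -> : (fun j => eps (eps (w j))) = w.
    by apply: functional_extensionality => j; rewrite eps_invol.
  rewrite !scalerDr !scalerA lin2.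
  have -> : (1 - 'i) * beta R + (1 + 'i) * (beta R)^* = 4%:C.
    by rewrite /beta; simpc; apply/eqP; rewrite eq_complex /=; apply/andP; split; apply/eqP; ring.
  have -> : (1 - 'i) * (beta R)^* + (1 + 'i) * beta R = 0.
    by rewrite /beta; simpc; apply/eqP; rewrite eq_complex /=; apply/andP; split; apply/eqP; ring.
  by rewrite scale0r addr0.
have e1 : NS ip (fun i => 4%:C *: B w i) =
    NS ip (fun i => (1 - 'i) *: Gop B w i + (1 + 'i) *: G' i).
  by congr (NS ip _); apply: functional_extensionality => i; apply: hid.
rewrite NS_real_scale // in e1.
have := NS_add_le hh (fun i => (1 - 'i) *: Gop B w i) (fun i => (1 + 'i) *: G' i).
rewrite -e1 !NS_scale //.
have -> : RE (1 - 'i : R[i]) ^+ 2 + IM (1 - 'i : R[i]) ^+ 2 = 2 by simpc => /=; ring.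
have -> : RE (1 + 'i : R[i]) ^+ 2 + IM (1 + 'i : R[i]) ^+ 2 = 2 by simpc => /=; ring.
have := hG w; have := NS_ge0 hh (B w).
rewrite (_ : (4 : R) ^+ 2 = 16); last by rewrite expr2; ring.
lra.
Qed.


Definition blk n (dg y t : 'I_n -> 'I_n -> H -> H) : 'I_(n + n) -> 'I_(n + n) -> H -> H :=
  fun i j => match split i, split j with
  | inl a, inl b => dg a b
  | inl a, inr b => y a b
  | inr b, inl a => t b a
  | inr a, inr b => dg a b
  end.

Lemma blk_herm n (dg y t : 'I_n -> 'I_n -> H -> H) :
  (forall a b, is_sadj ip eps (dg b a) (dg a b)) ->
  (forall a b, is_sadj ip eps (t b a) (y a b)) ->
  mx_herm ip eps (blk dg y t).
Proof.
move=> hd ht i j; rewrite /blk.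
case: (split i) => a; case: (split j) => b //.
exact: sadj_sym.
Qed.

Lemma eps_sum I (r : seq I) (F : I -> H) : eps (\sum_(i <- r) F i) = \sum_(i <- r) eps (F i).
Proof. by elim/big_rec2: _ => [|i x y _ <-]; rewrite ?eps0 // epsD. Qed.

Lemma sl n (a : 'I_n) : split (lshift n a) = inl a.
Proof. exact: (@unsplitK n n (inl a)). Qed.
Lemma sr n (a : 'I_n) : split (rshift n a) = inr a.
Proof. exact: (@unsplitK n n (inr a)). Qed.

Lemma blk_formula n (c : R) (P : H -> H) (dg y t : 'I_n -> 'I_n -> H -> H)
  (u : 'I_(n + n) -> H) :
  (forall a b h, dg a b h = (if a == b then c%:C else 0) *: P h) ->
  (forall a b, is_sadj ip eps (t b a) (y a b)) ->
  let v := fun a => u (lshift n a) in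
  let w := fun b => u (rshift n b) in
  let z := vip ip (mx_apply (blk dg y t) u) u in
  let z1 := vip ip (fun a => P (v a)) v in
  let z2 := vip ip (fun a => P (w a)) w in
  RE z - IM z = c * (RE z1 - IM z1) + c * (RE z2 - IM z2)
     + RE (vip ip (Gop (mx_apply y) w) v).
Proof.
move=> hd ht v w z z1 z2.
have hB : forall a, mx_apply (blk dg y t) u (lshift n a) = c%:C *: P (v a) + mx_apply y w a.
  move=> a; rewrite /mx_apply big_split_ord /=; congr (_ + _).
    rewrite (bigD1 a) //= big1 => [|b hb].
      by rewrite /blk (sl a) hd eqxx addr0.
    by rewrite /blk (sl a) (sl b) hd eq_sym (negbTE hb) scale0r.
  by apply: eq_bigr => b _; rewrite /blk (sl a) (sr b).
have hC : forall b, mx_apply (blk dg y t) u (rshift n b) =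
     \sum_a t b a (v a) + c%:C *: P (w b).
  move=> b; rewrite /mx_apply big_split_ord /=; congr (_ + _).
    by apply: eq_bigr => a _; rewrite /blk (sr b) (sl a).
  rewrite (bigD1 b) //= big1 => [|a ha].
    by rewrite /blk (sr b) hd eqxx addr0.
  by rewrite /blk (sr b) (sr a) hd eq_sym (negbTE ha) scale0r.
set p := vip ip (mx_apply y w) v.
set q := vip ip (fun a => eps (mx_apply y (fun j => eps (w j)) a)) v.
have hz : z = c%:C * z1 + p + q^* + c%:C * z2.
  rewrite /z /vip big_split_ord /=.
  under eq_bigr do rewrite hB (ipDl hh) (ipZl hh).
  under [X in _ + X = _]eq_bigr do rewrite hC (ipDl hh) (ipZl hh) (ip_suml hh).
  rewrite !big_split /= -!mulr_sumr /=.
  have -> : \sum_b \sum_a ip (t b a (v a)) (u (rshift n b)) = q^*.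
    rewrite /q /vip rmorph_sum exchange_big /=; apply: eq_bigr => b _.
    rewrite /mx_apply eps_sum (ip_suml hh) rmorph_sum; apply: eq_bigr => a _.
    by rewrite (ht b a) [LHS](ip_sym hh).
  rewrite /z1 /z2 /p /vip; rewrite -!addrA; congr (_ + _); rewrite addrC -!addrA; congr (_ + _).
have hG : vip ip (Gop (mx_apply y) w) v = beta R * p + (beta R)^* * q.
  by rewrite /Gop vipDl // !vipZl.
rewrite hz hG /beta; clear hz hG; clearbody z1 z2 p q; case: z1 => a1 a2; case: z2 => b1 b2; case: p => p1 p2; case: q => q1 q2.
simpc => /=; ring.
Qed.

End Grad.

Section Maps.
Variables (R : realType) (H K : lmodType R[i]) (ipH : H -> H -> R[i]) (ipK : K -> K -> R[i])
  (epsH : H -> H) (epsK : K -> K) (X : (H -> H) -> Prop) (Y : (K -> K) -> Prop).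
Hypotheses (hH : is_hilbert ipH) (hK : is_hilbert ipK) (gH : is_grading ipH epsH)
  (gK : is_grading ipK epsK) (sH : super_opsys ipH epsH X) (sK : super_opsys ipK epsK Y).
Variable phi : (H -> H) -> (K -> K).
Hypothesis hphi : star_linear ipH ipK epsH epsK X Y phi.

Lemma X_id : X id. Proof. by case: sH. Qed.
Lemma X_comb a T U : X T -> X U -> X (fun x => a *: T x + U x).
Proof. by case: sH => _ _ h _ _; apply: h. Qed.
Lemma X_adj T : X T -> exists S, X S /\ is_sadj ipH epsH T S.
Proof. by case: sH => _ _ _ _ h; apply: h. Qed.
Lemma X_bop T : X T -> bop ipH T.
Proof. by case: sH => h _ _ _ _; apply: h. Qed.

Lemma phi_lin a T U : X T -> X U ->
  phi (fun x => a *: T x + U x) = (fun y => a *: phi T y + phi U y).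
Proof. by case: hphi => _ h _; apply: h. Qed.
Lemma phi_sadj T S : X T -> X S -> is_sadj ipH epsH T S -> is_sadj ipK epsK (phi T) (phi S).
Proof. by case: hphi => _ _ h; apply: h. Qed.

Definition zf : H -> H := fun _ => 0.
Lemma zfE : zf = (fun x => (-1) *: id x + id x).
Proof. by apply: functional_extensionality => x; rewrite scaleN1r addNr. Qed.
Lemma X_zf : X zf.
Proof. by rewrite zfE; apply: X_comb; apply: X_id. Qed.
Lemma phi_zf : phi zf = (fun _ => 0).
Proof.
rewrite zfE phi_lin; try exact: X_id.
by apply: functional_extensionality => y; rewrite scaleN1r addNr.
Qed.

Definition scf (k : R[i]) : H -> H := fun x => k *: id x + zf x.
Lemma X_scf k : X (scf k).
Proof. by apply: X_comb; [apply: X_id | apply: X_zf]. Qed.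
Lemma phi_scf k : phi (scf k) = (fun y => k *: phi id y).
Proof.
rewrite /scf phi_lin; [|exact: X_id|exact: X_zf]; rewrite phi_zf.
by apply: functional_extensionality => y; rewrite addr0.
Qed.


Lemma sum_delta n (i : 'I_n) (u : 'I_n -> H) (k : R[i]) :
  \sum_j (if i == j then scf k else zf) (u j) = k *: u i.
Proof.
rewrite (bigD1 i) //= eqxx big1 => [|j hj]; first by rewrite /scf /zf /= !addr0.
by rewrite eq_sym (negbTE hj).
Qed.

Lemma sp_core n (x : 'I_n -> 'I_n -> H -> H) :
  mx_in X x -> mx_superpos ipH epsH x ->
  (forall (m : 'I_n -> 'I_n -> H -> H) c, mx_in X m -> mnorm_le ipH m c ->
      mnorm_le ipK (amplify phi m) c) ->
  unital phi ->
  mx_superpos ipK epsK (amplify phi x).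
Proof.
move=> hx [hherm hpos] hcc hun.
have hhermK : mx_herm ipK epsK (amplify phi x).
  by move=> i j; apply: phi_sadj => //; apply: hherm.
split => //; apply/(pos_iff hK hhermK).
have [M [M0 hM]] := mx_bound hH (fun i j => X_bop (hx i j)).
apply: (core_pos hH hK M0 hM).
  by move=> u; move/(pos_iff hH hherm): hpos; apply.
move=> t t0 hu v.
pose mt := fun i j => fun h => (- beta R) *: x i j h + (if i == j then scf t%:C else zf) h.
have hmt : mx_in X mt.
  move=> i j; apply: X_comb; first exact: hx.
  by case: (i == j); [exact: X_scf | exact: X_zf].
have eH : forall u, mx_apply mt u = (fun i => t%:C *: u i - beta R *: mx_apply x u i).
  move=> u; apply: functional_extensionality => i.
  rewrite /mx_apply /mt big_split /= -scaler_sumr sum_delta //.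
  by rewrite scaleNr addrC.
have eK : forall v, mx_apply (amplify phi mt) v =
    (fun i => t%:C *: v i - beta R *: mx_apply (amplify phi x) v i).
  move=> v'; apply: functional_extensionality => i.
  rewrite /mx_apply /amplify /mt.
  under eq_bigr => j _.
    rewrite phi_lin; [|exact: hx|by case: (i == j); [exact: X_scf | exact: X_zf]].
    over.
  rewrite /= big_split /= -scaler_sumr scaleNr addrC; congr (_ - _).
  rewrite (bigD1 i) //= eqxx big1 => [|j hj]; first by rewrite phi_scf hun addr0.
  by rewrite eq_sym (negbTE hj) phi_zf.
set c := Num.sqrt (t ^+ 2 + 2 * M).
have hc2 : c ^+ 2 = t ^+ 2 + 2 * M.
  by rewrite sqr_sqrtr // addr_ge0 ?sqr_ge0 // mulr_ge0.
have hmn : mnorm_le ipH mt c.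
  split; first exact: sqrtr_ge0.
  by move=> u; rewrite -!(NSE hH) eH hc2; apply: hu.
have [_ hK'] := hcc mt c hmt hmn.
by have := hK' v; rewrite -!(NSE hK) eK hc2.
Qed.


Lemma NS_opp n (v : 'I_n -> H) : NS ipH (fun i => - v i) = NS ipH v.
Proof. by rewrite /NS (vipNl hH) (vipNr hH) opprK. Qed.

Lemma NS_Gop n (A : ('I_n -> H) -> ('I_n -> H)) (C : R) :
  (forall u, NS ipH (A u) <= C ^+ 2 * NS ipH u) ->
  forall w, NS ipH (Gop epsH A w) <= (4 * C) ^+ 2 * NS ipH w.
Proof.
move=> hA w; rewrite /Gop.
apply: (le_trans (NS_add_le hH _ _)); rewrite !(NS_scale hH).
have -> : RE (beta R) ^+ 2 + IM (beta R) ^+ 2 = 2 by rewrite /beta; simpc => /=; ring.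
have -> : RE (beta R)^* ^+ 2 + IM (beta R)^* ^+ 2 = 2 by rewrite /beta; simpc => /=; ring.
rewrite (NS_eps gH) (_ : NS ipH w = NS ipH (fun j => epsH (w j))); last by rewrite (NS_eps gH).
have := hA w; have := hA (fun j => epsH (w j)); rewrite (NS_eps gH).
have := NS_ge0 hH w; have := sqr_ge0 C.
rewrite expr2 (expr2 (4 * C)); nra.
Qed.

End Maps.

Section Maps2.
Variables (R : realType) (H K : lmodType R[i]) (ipH : H -> H -> R[i]) (ipK : K -> K -> R[i])
  (epsH : H -> H) (epsK : K -> K) (X : (H -> H) -> Prop) (Y : (K -> K) -> Prop).
Hypotheses (hH : is_hilbert ipH) (hK : is_hilbert ipK) (gH : is_grading ipH epsH)
  (gK : is_grading ipK epsK) (sH : super_opsys ipH epsH X) (sK : super_opsys ipK epsK Y).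
Variable phi : (H -> H) -> (K -> K).
Hypothesis hphi : star_linear ipH ipK epsH epsK X Y phi.

Lemma cb_core (e : R) : 0 <= e ->
  completely_superpositive ipH ipK epsH epsK X phi ->
  (forall (n : nat) (v : 'I_n -> K),
     RE (vip ipK (fun a => phi id (v a)) v) - IM (vip ipK (fun a => phi id (v a)) v)
       <= e * NS ipK v) ->
  forall (n : nat) (x : 'I_n -> 'I_n -> H -> H) (C : R), mx_in X x -> mnorm_le ipH x C ->
  forall w, NS ipK (mx_apply (amplify phi x) w) <= 8 * C ^+ 2 * e ^+ 2 * NS ipK w.
Proof.
move=> e0 hcsp hE n x C hx [C0 hC].
have hCn : forall u, NS ipH (mx_apply x u) <= C ^+ 2 * NS ipH u.
  by move=> u; rewrite !(NSE hH); apply: hC.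
pose Tf a b := proj1_sig (constructive_indefinite_description _ (X_adj sH (hx a b))).
have hTf : forall a b, X (Tf a b) /\ is_sadj ipH epsH (x a b) (Tf a b).
  by move=> a b; rewrite /Tf; case: constructive_indefinite_description.
pose t := fun b a => Tf a b.
have ht : forall a b, is_sadj ipH epsH (t b a) (x a b).
  by move=> a b; apply: (sadj_sym hH gH); case: (hTf a b).
pose c := 2 * C.
have c0 : 0 <= c by rewrite mulr_ge0.
pose dg := fun a b : 'I_n => if a == b then scf c%:C else @zf _ H.
have hd : forall a b h, dg a b h = (if a == b then c%:C else 0) *: id h.
  by move=> a b h; rewrite /dg; case: (a == b); rewrite /scf /zf /= ?addr0 ?scale0r.
have hdX : forall a b, X (dg a b).
  by move=> a b; rewrite /dg; case: (a == b); [apply: (X_scf sH) | apply: (X_zf sH)].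
pose z := blk dg x t.
have hzX : mx_in X z.
  move=> i j; rewrite /z /blk; case: (split i) => a; case: (split j) => b //.
  by case: (hTf b a).
have hdh : forall a b, is_sadj ipH epsH (dg b a) (dg a b).
  move=> a b u w; rewrite /is_sadj !hd eq_sym /=.
  set k := (if a == b then c%:C else 0).
  have hk : k^* = k by rewrite /k; case: (a == b) => //; [apply: conjc_real | apply: conjc0].
  rewrite (epsZ gH) (eps_invol gH) (ipZl hH) (ipZr hH); congr (_ * _); symmetry; exact: hk.
have hherm : mx_herm ipH epsH z by apply: (blk_herm hH gH hdh ht).
have hpos : mx_pos ipH (fun i j => giota epsH (z i j)).
  apply/(pos_iff hH hherm) => u.
  have := blk_formula hH gH u hd ht; rewrite /= => ->.
  set v := fun a => u (lshift n a); set w := fun b => u (rshift n b).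
  have e1 : RE (vip ipH (fun a => id (v a)) v) - IM (vip ipH (fun a => id (v a)) v) = NS ipH v.
    by rewrite (vip_Im hH) subr0.
  have e2 : RE (vip ipH (fun a => id (w a)) w) - IM (vip ipH (fun a => id (w a)) w) = NS ipH w.
    by rewrite (vip_Im hH) subr0.
  rewrite e1 e2.
  have hb := vip_bound hH (fun i => - v i) (mulr_ge0 (ler0n _ 4) C0) (NS_Gop hH gH hCn w).
  move: hb; rewrite (vipNr hH) raddfN /= NS_opp //.
  have := NS_ge0 hH v; have := NS_ge0 hH w; rewrite /c; nra.
have [hhermK hposK] := hcsp (n + n) z hzX (conj hherm hpos).
have ez : amplify phi z = blk (fun a b => phi (dg a b)) (amplify phi x) (fun b a => phi (t b a)).
  apply: functional_extensionality => i; apply: functional_extensionality => j.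
  by rewrite /amplify /z /blk; case: (split i) => a; case: (split j) => b.
rewrite ez in hhermK hposK.
have hd' : forall a b y, phi (dg a b) y = (if a == b then c%:C else 0) *: phi id y.
  move=> a b y; rewrite /dg; case: (a == b).
    by rewrite (phi_scf sH hphi).
  by rewrite (phi_zf sH hphi) scale0r.
have ht' : forall a b, is_sadj ipK epsK (phi (t b a)) (amplify phi x a b).
  move=> a b; apply: (phi_sadj hphi); [by case: (hTf a b) | exact: hx | exact: ht].
have key : forall w v, - ((c * e) * (NS ipK v + NS ipK w)) <=
    RE (vip ipK (Gop epsK (mx_apply (amplify phi x)) w) v).
  move=> w v.
  pose u := fun i : 'I_(n + n) => match split i with inl a => v a | inr b => w b end.
  have ev : (fun a => u (lshift n a)) = v.
    by apply: functional_extensionality => a; rewrite /u (sl a).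
  have ew : (fun b => u (rshift n b)) = w.
    by apply: functional_extensionality => b; rewrite /u (sr b).
  move/(pos_iff hK hhermK): hposK => /(_ u).
  have ev' : (fun a => phi id (u (lshift n a))) = (fun a => phi id (v a)).
    by apply: functional_extensionality => a; rewrite /u (sl a).
  have ew' : (fun a => phi id (u (rshift n a))) = (fun a => phi id (w a)).
    by apply: functional_extensionality => a; rewrite /u (sr a).
  have := blk_formula hK gK u hd' ht'; rewrite /= ev' ew' ev ew => ->.
  have h1 := ler_wpM2l c0 (hE n v); have h2 := ler_wpM2l c0 (hE n w).
  rewrite !mulrA in h1 h2; lra.
move=> w; have := core_cb hK gK (mulr_ge0 c0 e0) key w.
rewrite /c; have := NS_ge0 hK w; nra.
Qed.

End Maps2.


Local Close Scope complex_scope.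
Unset Implicit Arguments.

Theorem proposition3 (R : realType) (H K : lmodType R[i])
  (ipH : H -> H -> R[i]) (ipK : K -> K -> R[i]) (epsH : H -> H) (epsK : K -> K)
  (X : (H -> H) -> Prop) (Y : (K -> K) -> Prop) :
  is_hilbert ipH -> is_hilbert ipK ->
  is_grading ipH epsH -> is_grading ipK epsK ->
  super_opsys ipH epsH X -> super_opsys ipK epsK Y ->
  [/\ (forall phi : (H -> H) -> (K -> K),
         star_linear ipH ipK epsH epsK X Y phi -> unital phi ->
         contractive ipH ipK X phi -> superpositive ipH ipK epsH epsK X phi),
      (forall phi : (H -> H) -> (K -> K),
         star_linear ipH ipK epsH epsK X Y phi -> unital phi ->
         completely_contractive ipH ipK X phi ->
         completely_superpositive ipH ipK epsH epsK X phi),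
      (forall psi : (H -> H) -> (K -> K),
         star_linear ipH ipK epsH epsK X Y psi ->
         completely_superpositive ipH ipK epsH epsK X psi ->
         forall d : R, opnorm_le ipK (psi id) d -> cb_le ipH ipK X psi (8 * d)) &
      (forall psi : (H -> H) -> (K -> K),
         star_linear ipH ipK epsH epsK X Y psi ->
         completely_superpositive ipH ipK epsH epsK X psi ->
         unital psi -> cb_le ipH ipK X psi 4)].
Proof.
move=> hH hK gH gK sH sK; split.
- move=> phi hphi hun hcon T hT hsp.
  apply: (sp_core hH hK sH hphi (x := fun _ _ : 'I_1 => T)) => //.
  move=> m c hm /mn1 hmn; apply/mn1; exact: hcon (hm ord0 ord0) hmn.
- move=> phi hphi hun hcc n x hx hsp.
  apply: (sp_core hH hK sH hphi) => // m c hm hmn; exact: hcc.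
- move=> psi hpsi hcsp d hd n x c hx hmn.
  have d0 : 0 <= d by case: hd.
  have c0 : 0 <= c by case: hmn.
  have hE : forall (n : nat) (v : 'I_n -> K),
     complex.Re (vip ipK (fun a => psi id (v a)) v) - complex.Im (vip ipK (fun a => psi id (v a)) v)
       <= (2 * d) * NS ipK v.
    by move=> n' v; apply: (RI_bound hK) => //; apply: (opnorm_ns hK hd).
  have hb := cb_core hH hK gH gK sH hpsi (mulr_ge0 (ler0n _ 2) d0) hcsp hE hx hmn.
  split; first by rewrite !mulr_ge0.
  move=> v; rewrite -!(NSE hK); apply: (le_trans (hb v)).
  apply: ler_wpM2r; first exact: NS_ge0.
  have -> : 8 * c ^+ 2 * (2 * d) ^+ 2 = 32 * (c * d) ^+ 2 by ring.
  have -> : (8 * d * c) ^+ 2 = 64 * (c * d) ^+ 2 by ring.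
  have := sqr_ge0 (c * d); lra.
- move=> psi hpsi hcsp hun n x c hx hmn.
  have c0 : 0 <= c by case: hmn.
  have hE : forall (n : nat) (v : 'I_n -> K),
     complex.Re (vip ipK (fun a => psi id (v a)) v) - complex.Im (vip ipK (fun a => psi id (v a)) v)
       <= 1 * NS ipK v.
    by move=> n' v; rewrite hun /= (vip_Im hK) subr0 mul1r.
  have hb := cb_core hH hK gH gK sH hpsi ler01 hcsp hE hx hmn.
  split; first by rewrite !mulr_ge0.
  move=> v; rewrite -!(NSE hK); apply: (le_trans (hb v)).
  apply: ler_wpM2r; first exact: NS_ge0.
  have -> : 8 * c ^+ 2 * 1 ^+ 2 = 8 * c ^+ 2 by ring.
  have -> : (4 * c) ^+ 2 = 16 * c ^+ 2 by ring.
  have := sqr_ge0 c; lra.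
Qed.
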